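(* Let $C=\begin{pmatrix}0&1\\-1&0\end{pmatrix}$, $D=\begin{pmatrix}0&1\\-1&1\end{pmatrix}$ and $\Gamma_3=\langle C,D\rangle\subset\mathrm{PSL}_2\mathbb{R}$ (the $(2,3,\infty)$-triangle group, i.e. the modular group, with $\Gamma_3\cong\langle C,D\mid C^2=D^3=1\rangle$). If $X,Y\in\Gamma_3$ satisfy $\Gamma_3=\langle X,Y\rangle$ and $\mathrm{tr}\,X=\mathrm{tr}\,Y$, then $X$ and $Y$ are parabolic.
   Context: Traces are of lifts to $\mathrm{SL}_2\mathbb{R}$; ''$\mathrm{tr}\,X=\mathrm{tr}\,Y$'' means the elements admit lifts of equal trace. Parabolic means non-identity with $\mathrm{tr}^2=4$. *)

(* Defs.v *)
(* Elements of PSL_2(R) lying in Gamma_3 are represented by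
   integer lifts in SL_2(Z) (every word in C, D is an integer matrix);
   equality in PSL_2 is equality up to sign. *)
From HB Require Import structures.
From mathcomp Require Import all_boot all_order all_algebra.
Set Implicit Arguments. Unset Strict Implicit. Unset Printing Implicit Defensive.
Import Order.TTheory GRing.Theory Num.Theory.
Local Open Scope ring_scope.

Definition mx2 (a b c d : int) : 'M[int]_2 :=
  \matrix_(i < 2, j < 2)
    if (i == 0 :> nat) then (if (j == 0 :> nat) then a else b)
    else (if (j == 0 :> nat) then c else d).

Definition matC : 'M[int]_2 := mx2 0 1 (-1) 0.
Definition matD : 'M[int]_2 := mx2 0 1 (-1) 1.

(* Matrices in SL_2 given by words in the elements of S and their inverses
   (for det-1 matrices the inverse is the adjugate). *)
Inductive sgen (S : seq 'M[int]_2) : 'M[int]_2 -> Prop :=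
  | sgen1 : sgen S 1%:M
  | sgenM : forall A M, A \in S -> sgen S M -> sgen S (A *m M)
  | sgenV : forall A M, A \in S -> sgen S M -> sgen S (\adj A *m M).

(* membership of the class of M in the subgroup of PSL_2 generated by the
   classes of the elements of S *)
Definition pgen (S : seq 'M[int]_2) (M : 'M[int]_2) : Prop :=
  sgen S M \/ sgen S (- M).

Definition Gamma3 (M : 'M[int]_2) : Prop := pgen [:: matC; matD] M.

(* traces of lifts agree: equal up to sign *)
Definition same_trace (X Y : 'M[int]_2) : Prop :=
  \tr X = \tr Y \/ \tr X = - \tr Y.

Definition parabolic (M : 'M[int]_2) : Prop :=
  M <> 1%:M /\ M <> - 1%:M /\ (\tr M) ^+ 2 = 4.

(* Main.v *)
Require Import Defs.
From HB Require Import structures.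
From mathcomp Require Import all_boot all_order all_algebra.
From Stdlib Require Import ZArith Lia Psatz.
Import Order.TTheory GRing.Theory Num.Theory.
Local Open Scope ring_scope.

Definition toZ (n : int) : Z := match n with Posz k => Z.of_nat k | Negz k => (- Z.of_nat k - 1)%Z end.

Lemma toZ_add a b : toZ (a + b) = (toZ a + toZ b)%Z.
Proof.
case: a => m; case: b => n; rewrite /GRing.add /= /intZmod.addz /=.
- rewrite -plusE; lia.
- case: ltnP => /= [/ssrnat.ltP|/ssrnat.leP] H; rewrite -minusE; lia.
- case: ltnP => /= [/ssrnat.ltP|/ssrnat.leP] H; rewrite -minusE; lia.
- rewrite -plusE; lia.
Qed.
Lemma toZ_opp a : toZ (- a) = (- toZ a)%Z.
Proof.
case: a => [[|m]|m]; rewrite /GRing.opp /= /intZmod.oppz /=; lia.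
Qed.

Lemma toZ_mul a b : toZ (a * b) = (toZ a * toZ b)%Z.
Proof.
case: a => m; case: b => n; rewrite /GRing.mul /= /intRing.mulz /=.
- rewrite -multE; lia.
- have := toZ_opp (Posz (m * n.+1)); rewrite /GRing.opp /= => ->; rewrite /= -multE; lia.
- have := toZ_opp (Posz (n * m.+1)); rewrite /GRing.opp /= => ->; rewrite /= -multE; lia.
- rewrite -multE; lia.
Qed.

Lemma toZ_inj a b : toZ a = toZ b -> a = b.
Proof. case: a => m; case: b => n /=; move=> H; f_equal; lia. Qed.

Record Z4 := mk { e1 : Z; e2 : Z; e3 : Z; e4 : Z }.
Definition i1 : 'I_2 := lift ord0 ord0.
Definition m2z (M : 'M[int]_2) : Z4 :=
  mk (toZ (M ord0 ord0)) (toZ (M ord0 i1)) (toZ (M i1 ord0)) (toZ (M i1 i1)).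
Definition zmul (A B : Z4) : Z4 :=
  mk (e1 A * e1 B + e2 A * e3 B)%Z (e1 A * e2 B + e2 A * e4 B)%Z
     (e3 A * e1 B + e4 A * e3 B)%Z (e3 A * e2 B + e4 A * e4 B)%Z.
Definition zadj (A : Z4) : Z4 := mk (e4 A) (- e2 A)%Z (- e3 A)%Z (e1 A).

Lemma m2z_mul A B : m2z (A *m B) = zmul (m2z A) (m2z B).
Proof.
rewrite /m2z /zmul /= !mxE !big_ord_recl !big_ord0 !addr0 !toZ_add !toZ_mul //.
Qed.

Lemma ord2E (i : 'I_2) : i = ord0 \/ i = i1.
Proof. case: i => [[|[|n]] H]; [left|right|]; try by apply/val_inj. by []. Qed.

Lemma lift01 (j : 'I_1) : lift ord0 j = i1.
Proof. by apply/val_inj; case: j => [[|]]. Qed.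
Lemma lift10 (j : 'I_1) : lift i1 j = ord0.
Proof. by apply/val_inj; case: j => [[|]]. Qed.

Lemma m2z_adj A : m2z (\adj A) = zadj (m2z A).
Proof.
rewrite /m2z /zadj /= !mxE /cofactor !det_mx11 !mxE /= !lift01 !lift10.
rewrite /bump /= !expr0 !expr1 expr2 !mulNr !mul1r !opprK !toZ_opp //.
Qed.
Open Scope Z_scope.
Lemma notsq x : x * x <> 2 /\ x * x <> 6 /\ x * x <> 5 /\ x * x <> 3.
Proof.
destruct (Z_lt_le_dec (Z.abs x) 3).
- assert (x = -2 \/ x = -1 \/ x = 0 \/ x = 1 \/ x = 2) by lia.
  repeat match goal with H : _ \/ _ |- _ => destruct H end; subst; simpl; lia.
- assert (x >= 3 \/ x <= -3) as [|] by lia; assert (x * x >= 9) by nia; lia.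
Qed.
Lemma sq_gap p q : p * p = q * q + 4 -> q = 0.
Proof.
intros H.
assert (HP : exists P Q, 0 <= P /\ 0 <= Q /\ P * P = q * q + 4 /\ Q * Q = q * q /\ (Q = q \/ Q = -q)).
{ exists (Z.abs p), (Z.abs q). destruct (Z.abs_spec p) as [[? Hp]|[? Hp]]; destruct (Z.abs_spec q) as [[? Hq]|[? Hq]]; rewrite Hp Hq; repeat split; try lia; nia. }
destruct HP as [P [Q [HP0 [HQ0 [HPQ [HQQ HQ]]]]]].
assert (Q < P) by nia.
assert (Q <= 1) by nia.
assert (Q = 0 \/ Q = 1) as [HQ1|HQ1] by lia; [lia|subst Q].
pose proof (notsq P). lia.
Qed.
Lemma nt x z s e : (s = 1 \/ s = -1) -> (e = 1 \/ e = -1) ->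
  4 - 2 * (x * x) - z * z + s * (x * x) * z = e -> x * x = 4.
Proof.
intros Hs He H.
set (u := x * x) in *.
assert (Hw : (2 * z - s * u) * (2 * z - s * u) = (u-4) * (u-4) - 4 * e) by (destruct Hs; subst; nia).
destruct He; subst e.
- assert (Hv := sq_gap (u-4) (2 * z - s * u) ltac:(lia)).
  assert (Hv2 : (u-4) * (u-4) = 4) by nia.
  assert (u = 6 \/ u = 2) by nia. pose proof (notsq x). unfold u in *; lia.
- assert (Hv := sq_gap (2 * z - s * u) (u-4) ltac:(lia)). lia.
Qed.
Close Scope Z_scope. Open Scope ring_scope.

Definition zone := mk 1 0 0 1.
Definition zopp (A : Z4) := mk (- e1 A) (- e2 A) (- e3 A) (- e4 A).

Lemma m2z_one : m2z 1%:M = zone.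
Proof. rewrite /m2z !mxE /=. by []. Qed.
Lemma m2z_opp A : m2z (- A) = zopp (m2z A).
Proof. by rewrite /m2z !mxE !toZ_opp. Qed.
Lemma m2z_C : m2z matC = mk 0 1 (-1) 0.
Proof. rewrite /m2z /matC /mx2 !mxE /=. by []. Qed.
Lemma tr_m2z A : toZ (\tr A) = (e1 (m2z A) + e4 (m2z A))%Z.
Proof. by rewrite /mxtrace !big_ord_recl big_ord0 addr0 !toZ_add lift01. Qed.
Lemma m2z_inj A B : m2z A = m2z B -> A = B.
Proof.
rewrite /m2z => [[H1 H2 H3 H4]]; apply/matrixP => i j.
by case: (ord2E i) => ->; case: (ord2E j) => ->; apply: toZ_inj.
Qed.
Lemma m2z_D : m2z matD = mk 0 1 (-1) 1.
Proof. by rewrite /m2z /matD /mx2 !mxE. Qed.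

Open Scope Z_scope.
Definition zzero := mk 0 0 0 0.
Definition zadd (A B : Z4) := mk (e1 A + e1 B) (e2 A + e2 B) (e3 A + e3 B) (e4 A + e4 B).
Definition zc A B := zadd (zmul A B) (zopp (zmul B A)).
Definition zdet A := e1 A * e4 A - e2 A * e3 A.
Definition letter x y l := l = x \/ l = y \/ l = zadj x \/ l = zadj y.
Inductive zw (x y : Z4) : Z4 -> Prop :=
 | zw1 : zw x y zone
 | zwM l M : letter x y l -> zw x y M -> zw x y (zmul l M).

Ltac zsolve := repeat match goal with A : Z4 |- _ => destruct A end;
  unfold zc, zmul, zadd, zopp, zadj, zone, zzero; cbn [e1 e2 e3 e4]; f_equal; ring.

Lemma zmulA a b c : zmul (zmul a b) c = zmul a (zmul b c). Proof. zsolve. Qed.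


Lemma Kl x y l : letter x y l -> exists l', zmul (zc x y) l = zmul l' (zc x y).
Proof.
case=> [->|[->|[->|->]]];
 [exists (zadj x)|exists (zadj y)|exists x|exists y]; zsolve.
Qed.

Arguments Kl {x y l}.
Lemma Kw x y M : zw x y M -> exists M', zmul (zc x y) M = zmul M' (zc x y).
Proof.
elim=> [|l M1 Hl _ [M' HM]].
  exists zone. zsolve.
have [l' Hl'] := Kl Hl.
exists (zmul l' M'); by rewrite -zmulA Hl' !zmulA HM.
Qed.

Arguments Kw {x y M}.
Lemma LL x y l1 l2 : letter x y l1 -> letter x y l2 -> exists N, zc l1 l2 = zmul N (zc x y).
Proof.
move=> H1 H2.
have E : forall n : Z, zmul (mk n 0 0 n) (zc x y) = mk (n * e1 (zc x y)) (n * e2 (zc x y)) (n * e3 (zc x y)) (n * e4 (zc x y)).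
  move=> n; zsolve.
case: H1 => [->|[->|[->|->]]]; case: H2 => [->|[->|[->|->]]];
 solve [ exists (mk 0 0 0 0); zsolve | exists (mk 1 0 0 1); zsolve | exists (mk (-1) 0 0 (-1)); zsolve ].
Qed.

Lemma zc_mulr a b c : zc a (zmul b c) = zadd (zmul (zc a b) c) (zmul b (zc a c)).
Proof. zsolve. Qed.
Lemma zc_mull a b c : zc (zmul a b) c = zadd (zmul a (zc b c)) (zmul (zc a c) b).
Proof. zsolve. Qed.
Lemma zmulDl a b c : zmul (zadd a b) c = zadd (zmul a c) (zmul b c).
Proof. zsolve. Qed.

Arguments LL {x y l1 l2}.
Lemma Lw x y l B : letter x y l -> zw x y B -> exists N, zc l B = zmul N (zc x y).
Proof.
move=> Hl; elim=> [|l2 M Hl2 HM [N2 H2]].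
  exists zzero; zsolve.
have [N1 H1] := LL Hl Hl2.
have [M' H3] := Kw HM.
exists (zadd (zmul N1 M') (zmul l2 N2)).
by rewrite zc_mulr H1 H2 zmulDl !zmulA H3.
Qed.

Arguments Lw {x y l B}.
Lemma Ww x y A B : zw x y A -> zw x y B -> exists N, zc A B = zmul N (zc x y).
Proof.
move=> HA HB; elim: HA => [|l M Hl HM [N2 H2]].
  exists zzero; zsolve.
have [N1 H1] := Lw Hl HB.
have [M' H3] := Kw HM.
exists (zadd (zmul l N2) (zmul N1 M')).
by rewrite zc_mull H1 H2 zmulDl !zmulA H3.
Qed.

Lemma zdet_w x y M : zdet x = 1 -> zdet y = 1 -> zw x y M -> zdet M = 1.
Proof.
move=> Hx Hy; elim=> [|l M' Hl _ IH]; first by [].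
have Hm : forall a b, zdet (zmul a b) = zdet a * zdet b by move=> a b; destruct a, b; rewrite /zdet /=; ring.
rewrite Hm IH; case: Hl => [->|[->|[->|->]]]; rewrite /zdet /= in Hx Hy *; lia.
Qed.

Lemma zdet_opp A : zdet (zopp A) = zdet A.
Proof. unfold zdet, zopp; cbn [e1 e2 e3 e4]; ring. Qed.
Lemma zc_oppl a b : zc (zopp a) b = zopp (zc a b). Proof. zsolve. Qed.
Lemma zc_oppr a b : zc a (zopp b) = zopp (zc a b). Proof. zsolve. Qed.
Lemma zdet_mul a b : zdet (zmul a b) = zdet a * zdet b.
Proof. unfold zdet, zmul; cbn [e1 e2 e3 e4]; ring. Qed.

Lemma fricke a b c d e f g h :
  zdet (zc (mk a b c d) (mk e f g h)) =
  4 * (a * d-b * c) * (e * h-f * g) - (a * d-b * c) * ((e+h) * (e+h)) - (e * h-f * g) * ((a+d) * (a+d))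
  - (a * e+b * g+c * f+d * h) * (a * e+b * g+c * f+d * h) + (a+d) * (e+h) * (a * e+b * g+c * f+d * h).
Proof. unfold zdet, zc, zmul, zadd, zopp; cbn [e1 e2 e3 e4]; ring. Qed.

Lemma finalZ a b c d e f g h : a * d-b * c = 1 -> e * h-f * g = 1 ->
  (zdet (zc (mk a b c d) (mk e f g h)) = 1 \/ zdet (zc (mk a b c d) (mk e f g h)) = -1) ->
  (a+d = e+h \/ a+d = -(e+h)) -> (a+d) * (a+d) = 4.
Proof.
rewrite fricke => -> -> HK Ht.
set z := a * e+b * g+c * f+d * h in HK.
have [s [Hs Es]] : exists s, (s = 1 \/ s = -1) /\ e+h = s * (a+d).
  case: Ht => Ht; [exists 1|exists (-1)]; split; try lia.
rewrite Es in HK; apply: (@nt (a+d) z s _ Hs HK).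
case: Hs => ->; ring.
Qed.

Lemma zdet_scal A B : (A = zone \/ A = zopp zone) -> zdet (zc A B) = 0 /\ zdet (zc B A) = 0.
Proof. case=> ->; destruct B; unfold zdet, zc, zmul, zadd, zopp, zone; cbn [e1 e2 e3 e4]; split; ring. Qed.

Lemma sgen_zw X Y M : sgen [:: X; Y] M -> zw (m2z X) (m2z Y) (m2z M).
Proof.
elim=> [|A M' HA _ IH|A M' HA _ IH]; first by rewrite m2z_one; exact: zw1.
- rewrite m2z_mul; apply: zwM IH; move: HA; rewrite !inE => /orP[/eqP->|/eqP->];
  rewrite /letter; tauto.
- rewrite m2z_mul m2z_adj; apply: zwM IH; move: HA; rewrite !inE => /orP[/eqP->|/eqP->];
  rewrite /letter; tauto.
Qed.

Lemma sgen_zw2 X Y M : sgen [:: X; Y] M -> zw (m2z X) (m2z Y) (m2z M).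
Proof. exact: sgen_zw. Qed.

Lemma zoppK a : zopp (zopp a) = a. Proof. destruct a; unfold zopp; cbn [e1 e2 e3 e4]; f_equal; ring. Qed.

Lemma pgen_z X Y M : pgen [:: X; Y] M ->
  exists w, zw (m2z X) (m2z Y) w /\ (m2z M = w \/ m2z M = zopp w).
Proof.
case=> H; have := @sgen_zw _ _ _ H; rewrite ?m2z_opp => Hw.
- by exists (m2z M); split; [|left].
- by exists (zopp (m2z M)); split; [|right; rewrite zoppK].
Qed.

Lemma unitZ p q : p * q = -1 -> q = 1 \/ q = -1.
Proof.
move=> H; have : p <= -1 \/ p = 0 \/ 1 <= p by lia.
have : q <= -2 \/ q = -1 \/ q = 0 \/ q = 1 \/ 2 <= q by lia.
move=> [?|[?|[?|[?|?]]]] [?|[?|?]]; subst; try nia; lia.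
Qed.

Close Scope Z_scope.
Open Scope ring_scope.

Lemma GammaC : Gamma3 matC.
Proof. left; have := @sgenM [:: matC; matD] matC 1%:M (mem_head _ _) (sgen1 _); by rewrite mulmx1. Qed.
Lemma GammaD : Gamma3 matD.
Proof. left; have H : matD \in [:: matC; matD] by rewrite in_cons mem_head orbT.
have := @sgenM [:: matC; matD] matD 1%:M H (sgen1 _); by rewrite mulmx1. Qed.

Lemma Gdet M : Gamma3 M -> zdet (m2z M) = 1%Z.
Proof.
have dC : zdet (m2z matC) = 1%Z by rewrite m2z_C.
have dD : zdet (m2z matD) = 1%Z by rewrite m2z_D.
case=> H; have := @sgen_zw _ _ _ H; move=> /(@zdet_w _ _ _ dC dD) //.
by rewrite m2z_opp zdet_opp.
Qed.

Arguments Gdet {M}. Arguments pgen_z {X Y M}. Arguments Ww {x y A B}.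
Theorem mainTheorem10 (X Y : 'M[int]_2) :
  Gamma3 X -> Gamma3 Y ->
  (forall M : 'M[int]_2, Gamma3 M -> pgen [:: X; Y] M) ->
  same_trace X Y ->
  parabolic X /\ parabolic Y.
Proof.
move=> HX HY Hgen Htr.
have dX := Gdet HX; have dY := Gdet HY.
have [wc [Hwc Ec]] := pgen_z (Hgen _ GammaC).
have [wd [Hwd Ed]] := pgen_z (Hgen _ GammaD).
have [N HN] := Ww Hwc Hwd.
have HK : (zdet (zc (m2z X) (m2z Y)) = 1 \/ zdet (zc (m2z X) (m2z Y)) = -1)%Z.
  apply: (@unitZ (zdet N)); rewrite -zdet_mul -HN.
  have E : zdet (zc (m2z matC) (m2z matD)) = (-1)%Z by rewrite m2z_C m2z_D.
  by case: Ec E => ->; case: Ed => ->; rewrite ?zc_oppl ?zc_oppr ?zdet_opp.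
have notI : forall M, (M = 1%:M \/ M = - 1%:M) -> m2z M = zone \/ m2z M = zopp zone.
  by move=> M [->|->]; [left|right]; rewrite ?m2z_opp m2z_one.
have Htr' : (toZ (\tr X) = toZ (\tr Y) \/ toZ (\tr X) = - toZ (\tr Y))%Z.
  by case: Htr => ->; [left|right]; rewrite ?toZ_opp.
rewrite !tr_m2z in Htr'.
have HKz : zdet (zc (m2z X) (m2z Y)) <> 0%Z by case: HK => ->.
have key : ((e1 (m2z X) + e4 (m2z X)) * (e1 (m2z X) + e4 (m2z X)) = 4 /\
            (e1 (m2z Y) + e4 (m2z Y)) * (e1 (m2z Y) + e4 (m2z Y)) = 4)%Z.
  move: dX dY HK Htr'; case: (m2z X) => a b c d; case: (m2z Y) => e f g h.
  move=> dX dY HK Ht; rewrite /zdet /= in dX dY.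
  have H1 := @finalZ _ _ _ _ _ _ _ _ dX dY HK Ht; split => //.
  by case: Ht => Ht; rewrite Ht in H1; nia.
case: key => kX kY.
split; (split; [|split]).
- move=> E; apply: HKz; exact: (@zdet_scal _ (m2z Y) (notI X (or_introl E))).1.
- move=> E; apply: HKz; exact: (@zdet_scal _ (m2z Y) (notI X (or_intror E))).1.
- by apply: toZ_inj; rewrite expr2 toZ_mul tr_m2z kX.
- move=> E; apply: HKz; exact: (@zdet_scal _ (m2z X) (notI Y (or_introl E))).2.
- move=> E; apply: HKz; exact: (@zdet_scal _ (m2z X) (notI Y (or_intror E))).2.
- by apply: toZ_inj; rewrite expr2 toZ_mul tr_m2z kY.
Qed.
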